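(* Every orthogonal, left-finite TRS is infinitarily normalising: for each orthogonal, left-finite TRS $\mathcal{R}$ and each partial term $t$ in $\mathcal{R}$, there is an $\mathcal{R}$-normal form that is strongly $p$-reachable from $t$.
   Context: Orthogonal = left-linear and non-overlapping; left-finite = all left-hand sides finite. Partial terms are terms over $\Sigma_\bot=\Sigma\uplus\{\bot\}$, ordered by $\le_\bot$ ($s\le_\bot t$ iff $s$ is $t$ with some subterms replaced by $\bot$), a complete semilattice; $\liminf_{\iota\to\alpha}a_\iota=\bigvee_{\beta<\alpha}\bigwedge_{\beta\le\iota<\alpha}a_\iota$. A reduction $(t_\iota\to_{\pi_\iota}t_{\iota+1})_{\iota<\alpha}$ with contexts $c_\iota$ ($t_\iota$ with position $\pi_\iota$ replaced by $\bot$) strongly $p$-converges to $t$ if $\liminf_{\iota\to\lambda}c_\iota=t_\lambda$ for all limit $\lambda<\alpha$, and $t$ is the last term (closed case) or $t=\liminf_{\iota\to\alpha}c_\iota$ (open case); $t$ is strongly $p$-reachable from $s$ if such a reduction from $s$ to $t$ exists. *)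

(* Defs.v *)
From mathcomp Require Import all_boot.
Set Implicit Arguments. Unset Strict Implicit. Unset Printing Implicit Defensive.

Section Terms.
Variables (F V : Type) (arity : F -> nat).

Inductive label := Fun of F | Var of V | Bot.

(* A (possibly infinite) partial term is a labelling of a tree domain of
   positions (sequences of naturals); None = position not in the term. *)
Definition pterm := seq nat -> option label.

Definition wf_term (t : pterm) : Prop :=
  [/\ t [::] <> None,
      (forall p i, t (rcons p i) <> None ->
         exists2 f, t p = Some (Fun f) & i < arity f)
    & (forall p f i, t p = Some (Fun f) -> i < arity f -> t (rcons p i) <> None)].

Definition total (t : pterm) : Prop := forall p, t p <> Some Bot.
Definition finite_term (t : pterm) : Prop :=
  exists n, forall p, n < size p -> t p = None.

Definition bot_term : pterm := fun p => if p is [::] then Some Bot else None.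

Definition subterm (t : pterm) (pi : seq nat) : pterm := fun p => t (pi ++ p).

Definition replace (t : pterm) (pi : seq nat) (s : pterm) : pterm :=
  fun p => if prefix pi p then s (drop (size pi) p) else t p.

(* application of a substitution: walk the position, switching to sigma x
   at the first variable occurrence met along the way *)
Fixpoint subst_aux (sigma : V -> pterm) (t : pterm) (q p : seq nat)
  : option label :=
  match t q with
  | Some (Var x) => sigma x p
  | _ => match p with
         | [::] => t q
         | i :: p' => subst_aux sigma t (rcons q i) p'
         end
  end.
Definition subst (sigma : V -> pterm) (t : pterm) : pterm :=
  fun p => subst_aux sigma t [::] p.

Definition wf_subst (sigma : V -> pterm) : Prop := forall x, wf_term (sigma x).

Definition vars (t : pterm) (x : V) : Prop := exists p, t p = Some (Var x).

Definition trs := pterm -> pterm -> Prop.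

Definition is_TRS (R : trs) : Prop :=
  forall l r, R l r ->
    [/\ wf_term l /\ wf_term r, total l, total r,
        (forall x, l [::] <> Some (Var x))
      & (forall x, vars r x -> vars l x)].

Definition left_finite (R : trs) : Prop := forall l r, R l r -> finite_term l.

Definition left_linear (R : trs) : Prop :=
  forall l r, R l r -> forall p q x,
    l p = Some (Var x) -> l q = Some (Var x) -> p = q.

(* non-overlapping: a non-variable subterm of a lhs l1 at pi is unifiable with
   a (renamed-apart) lhs l2 only if pi is the root and the rules coincide *)
Definition non_overlapping (R : trs) : Prop :=
  forall l1 r1 l2 r2 pi f (s1 s2 : V -> pterm),
    R l1 r1 -> R l2 r2 -> l1 pi = Some (Fun f) ->
    (forall x, wf_term (s1 x) /\ total (s1 x)) ->
    (forall x, wf_term (s2 x) /\ total (s2 x)) ->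
    subst s1 (subterm l1 pi) = subst s2 l2 ->
    [/\ pi = [::], l1 = l2 & r1 = r2].

Definition orthogonal (R : trs) : Prop := left_linear R /\ non_overlapping R.

Definition step (R : trs) (t : pterm) (pi : seq nat) (t' : pterm) : Prop :=
  exists l r sigma, [/\ R l r, wf_subst sigma,
    subterm t pi = subst sigma l & t' = replace t pi (subst sigma r)].

Definition normal_form (R : trs) (t : pterm) : Prop :=
  ~ exists pi l r sigma, [/\ R l r, wf_subst sigma & subterm t pi = subst sigma l].

Definition le_bot (s t : pterm) : Prop :=
  forall p, s p <> None -> s p = Some Bot \/ s p = t p.

Definition is_glb (S : pterm -> Prop) (g : pterm) : Prop :=
  [/\ wf_term g, (forall u, S u -> le_bot g u)
    & (forall h, wf_term h -> (forall u, S u -> le_bot h u) -> le_bot h g)].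
Definition is_lub (S : pterm -> Prop) (g : pterm) : Prop :=
  [/\ wf_term g, (forall u, S u -> le_bot u g)
    & (forall h, wf_term h -> (forall u, S u -> le_bot u h) -> le_bot g h)].

(* The ordinal alpha is represented by a well-ordered
   type W (its elements are the indices iota < alpha of the steps); the
   positions iota <= alpha are option W, with None standing for alpha. *)
Section Reduction.
Variables (W : Type) (lt : W -> W -> Prop).

Definition well_order : Prop :=
  [/\ well_founded lt, (forall a b c, lt a b -> lt b c -> lt a c)
    & (forall a b, lt a b \/ a = b \/ lt b a)].

Definition ltO (x y : option W) : Prop :=
  match x, y with
  | Some a, Some b => lt a b
  | Some _, None => True
  | None, _ => False
  end.

Definition is_succ (i : W) (x : option W) : Prop :=
  ltO (Some i) x /\ forall y, ltO (Some i) y -> x = y \/ ltO x y.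

Definition is_limit (x : option W) : Prop :=
  (exists y, ltO y x) /\ (forall y, ltO y x -> exists2 z, ltO y z & ltO z x).

Definition is_liminf (c : W -> pterm) (x : option W) (u : pterm) : Prop :=
  exists g : W -> pterm,
    (forall b, ltO (Some b) x ->
       is_glb (fun v => exists i, [/\ b = i \/ lt b i, ltO (Some i) x & v = c i])
              (g b))
    /\ is_lub (fun v => exists2 b, ltO (Some b) x & v = g b) u.

Definition strongly_p_converging (R : trs) (T : option W -> pterm)
    (P : W -> seq nat) (s t : pterm) : Prop :=
  let c := fun i => replace (T (Some i)) (P i) bot_term in
  [/\ forall x, wf_term (T x),
      (forall x, (forall y, ~ ltO y x) -> T x = s),
      (forall i x, is_succ i x -> step R (T (Some i)) (P i) (T x)),
      (forall x, is_limit x -> is_liminf c x (T x))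
    & T None = t].
End Reduction.

Definition sp_reachable (R : trs) (s t : pterm) : Prop :=
  exists (W : Type) (lt : W -> W -> Prop) (T : option W -> pterm)
         (P : W -> seq nat),
    well_order lt /\ strongly_p_converging lt R T P s t.

End Terms.

(* Main.v *)
Require Import Defs.
From mathcomp Require Import all_boot zify.
From Stdlib Require Import Classical ClassicalEpsilon FunctionalExtensionality.
Set Implicit Arguments. Unset Strict Implicit. Unset Printing Implicit Defensive.

Section Pf.
Variables (F V : Type) (arity : F -> nat).
Local Notation pterm := (pterm F V).
Local Notation wf := (@wf_term F V arity).
Local Notation Fn f := (@Fun F V f).
Local Notation Vr x := (@Var F V x).
Local Notation Bt := (Bot F V).

Lemma wf_prefix t p q : wf t -> t (p ++ q) <> None -> t p <> None.
Proof.
move=> [_ H2 _]; elim/last_ind: q => [|q i IH]; first by rewrite cats0.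
rewrite -rcons_cat => /H2 [f Hf _]; apply: IH; by rewrite Hf.
Qed.

Lemma wf_anc t p i q : wf t -> t (rcons p i ++ q) <> None ->
  exists2 f, t p = Some (Fn f) & i < arity f.
Proof. move=> Hw /(wf_prefix Hw); case: Hw => _ H2 _; exact: H2. Qed.

Lemma wf_None t p q : wf t -> t p = None -> t (p ++ q) = None.
Proof. move=> Hw H; case E: (t (p ++ q)) => //; exfalso.
by move: (@wf_prefix t p q Hw); rewrite E H => /(_ ltac:(done)). Qed.

Lemma wf_subterm t p : wf t -> t p <> None -> wf (subterm t p).
Proof.
move=> Hw Hp; case: (Hw) => H1 H2 H3; split; rewrite /subterm.
- by rewrite cats0.
- by move=> q i; rewrite -rcons_cat; apply: H2.
- by move=> q f i Hf Hi; rewrite -rcons_cat; apply: H3 Hf Hi.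
Qed.

Lemma prefix_rconsE (s p : seq nat) i :
  prefix s (rcons p i) = prefix s p || (s == rcons p i).
Proof.
apply/idP/idP.
- case/prefixP=> s'; case/lastP: s' => [|s'' j].
    by rewrite cats0 => ->; rewrite eqxx orbT.
  rewrite -rcons_cat => /eqP; rewrite eqseq_rcons => /andP [/eqP -> _].
  by rewrite prefix_prefix.
- case/orP => [/prefixP [s' ->]|/eqP ->]; last by rewrite prefix_refl.
  by rewrite rcons_cat prefix_prefix.
Qed.

Lemma wf_replace t pi s : wf t -> t pi <> None -> wf s -> wf (replace t pi s).
Proof.
move=> [T1 T2 T3] Hpi [S1 S2 S3]; split; rewrite /replace.
- by case: pi Hpi => [|j pi] /= Hpi.
- move=> p i; rewrite prefix_rconsE; case Hp: (prefix pi p) => /=.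
    case/prefixP: Hp => [s' ->]; rewrite rcons_cat !drop_size_cat //.
    by apply: S2.
  case: eqP => [E _|_].
    have [f Hf Hi] : exists2 f, t p = Some (Fn f) & i < arity f.
      by apply: T2; rewrite -E.
    by exists f.
  by move/T2.
- move=> p f i; case Hp: (prefix pi p) => /=.
    case/prefixP: Hp => [s' ->]; rewrite drop_size_cat // => Hf Hi.
    rewrite rcons_cat prefix_prefix drop_size_cat //; exact: S3 Hf Hi.
  move=> Hf Hi; rewrite prefix_rconsE Hp /=; case: eqP => [E|_].
    rewrite E drop_size; exact: S1.
  exact: T3 Hf Hi.
Qed.

Lemma wf_bot : wf (bot_term F V).
Proof. split => //; by move=> p i; case: p. Qed.

Lemma subst_root sigma r : wf_subst arity sigma -> wf r -> subst sigma r [::] <> None.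
Proof.
move=> Hs [R1 _ _]; rewrite /subst /=; case E: (r [::]) => [[f|x|]|] //.
by case: (Hs x).
Qed.

Lemma subst_child sigma r : wf_subst arity sigma -> wf r -> forall p q i,
  subst_aux sigma r q (rcons p i) <> None ->
  exists2 f, subst_aux sigma r q p = Some (Fn f) & i < arity f.
Proof.
move=> Hs [R1 R2 R3]; elim=> [|j p IH] q i /=; last first.
  case E: (r q) => [[f|x|]|] /=; try exact: IH.
  by case: (Hs x) => _ H _; apply: (H (j :: p)).
case E: (r q) => [[f|x|]|] /=.
  2: by case: (Hs x) => _ H _; apply: (H [::]).
all: move=> H; have H' : r (rcons q i) <> None by move=> E'; apply: H; rewrite E'.
all: have [h Hh Hi] := R2 _ _ H'.
all: rewrite E in Hh; try congruence.
by exists h => //; congruence.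
Qed.

Lemma subst_child2 sigma r : wf_subst arity sigma -> wf r -> forall p q f i,
  subst_aux sigma r q p = Some (Fn f) -> i < arity f ->
  subst_aux sigma r q (rcons p i) <> None.
Proof.
move=> Hs [R1 R2 R3]; elim=> [|j p IH] q f i /=.
- case E: (r q) => [[g|x|]|] //=.
  + move=> [Eg] Hi; subst g; have := R3 _ _ _ E Hi.
    by case: (r (rcons q i)) => [[g|y|]|] //= _; case: (Hs y).
  + by case: (Hs x) => _ _ H Hf Hi; apply: (H [::] f i).
- case E: (r q) => [[g|x|]|] /=; try exact: IH.
  by case: (Hs x) => _ _ H Hf Hi; apply: (H (j :: p) f i).
Qed.

Lemma wf_subst_term sigma r : wf_subst arity sigma -> wf r -> wf (subst sigma r).
Proof.
move=> Hs Hr; split; first exact: subst_root.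
- by move=> p i; apply: subst_child.
- by move=> p f i; apply: subst_child2.
Qed.


Lemma wf_take t p k : wf t -> t p <> None -> k < size p ->
  exists f, t (take k p) = Some (Fn f).
Proof.
move=> Hw Hp Hk; have E : p = rcons (take k p) (nth 0 p k) ++ drop k.+1 p.
  by rewrite cat_rcons -drop_nth // cat_take_drop.
by rewrite E in Hp; case: (wf_anc Hw Hp) => f Hf _; exists f.
Qed.

Lemma take_rcons_le (p : seq nat) i k : k <= size p -> take k (rcons p i) = take k p.
Proof. by move=> Hk; rewrite -cats1 takel_cat. Qed.

Section Glb.
Variable c : nat -> pterm.
Hypothesis Hc : forall m, wf (c m).

Definition agF n (q : seq nat) : Prop := exists f, forall m, n <= m -> c m q = Some (Fn f).
Definition agA n (q : seq nat) : Prop := exists a, forall m, n <= m -> c m q = Some a.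
Definition pcond n p := forall k, k < size p -> agF n (take k p).

Definition G n : pterm := fun p =>
  match excluded_middle_informative (pcond n p) with
  | right _ => None
  | left _ => match excluded_middle_informative (agA n p) with
     | left H => Some (proj1_sig (constructive_indefinite_description _ H))
     | right _ => if c n p is Some _ then Some Bt else None end end.

Lemma Gnp n p : ~ pcond n p -> G n p = None.
Proof. by rewrite /G; case: excluded_middle_informative. Qed.

Lemma Gag n p : pcond n p -> agA n p ->
  exists a, G n p = Some a /\ forall m, n <= m -> c m p = Some a.
Proof.
rewrite /G => H1 H2; case: excluded_middle_informative => // _.
case: excluded_middle_informative => // H3.
case: constructive_indefinite_description => a Ha /=; by exists a.
Qed.

Lemma Gnag n p : pcond n p -> ~ agA n p -> G n p = if c n p is Some _ then Some Bt else None.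
Proof.
rewrite /G => H1 H2; case: excluded_middle_informative => // _.
by case: excluded_middle_informative.
Qed.

Lemma G_le n m : n <= m -> le_bot (G n) (c m).
Proof.
move=> Hm p; case: (classic (pcond n p)) => H1; last by rewrite Gnp.
case: (classic (agA n p)) => H2.
  by case: (Gag H1 H2) => a [-> Ha] _; right; rewrite Ha.
by rewrite Gnag //; case: (c n p) => // _ _; left.
Qed.

Lemma pcond_rcons n p i : pcond n (rcons p i) -> pcond n p /\ agF n p.
Proof.
move=> H; split.
  move=> k Hk; rewrite -(take_rcons_le i (ltnW Hk)); apply: H.
  by rewrite size_rcons ltnS ltnW.
have := H (size p); rewrite size_rcons ltnSn take_rcons_le // take_size; exact.
Qed.

Lemma rcons_pcond n p i : pcond n p -> agF n p -> pcond n (rcons p i).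
Proof.
move=> H1 H2 k; rewrite size_rcons ltnS leq_eqVlt => /orP [/eqP ->|Hk].
  by rewrite take_rcons_le // take_size.
by rewrite take_rcons_le ?(ltnW Hk) //; apply: H1.
Qed.

Lemma G_Some_c n p a : G n p = Some a -> c n p <> None.
Proof.
move=> E; case: (classic (pcond n p)) => H1; last by rewrite Gnp in E.
case: (classic (agA n p)) => H2.
  by case: (Gag H1 H2) => a' [_ Ha]; rewrite Ha.
by rewrite Gnag // in E; case: (c n p) E.
Qed.

Lemma wf_G n : wf (G n).
Proof.
split.
- have H1 : pcond n [::] by [].
  case: (classic (agA n [::])) => H2.
    by case: (Gag H1 H2) => a [-> _].
  rewrite Gnag //; case: (Hc n) => R1 _ _; by case: (c n [::]) R1.
- move=> p i; case E: (G n (rcons p i)) => [a|] // _.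
  case: (classic (pcond n (rcons p i))) => H1; last by rewrite Gnp in E.
  case: (pcond_rcons H1) => H3 [f Hf].
  have H4 : agA n p by exists (Fn f).
  case: (Gag H3 H4) => a' [-> Ha']; have := Hf n (leqnn n); rewrite (Ha' n (leqnn n)) => -[->].
  have := G_Some_c E; case: (Hc n) => _ R2 _ /R2 [g Hg Hi].
  by rewrite (Hf n (leqnn n)) in Hg; move: Hg => [->]; exists g.
- move=> p f i E Hi.
  case: (classic (pcond n p)) => H1; last by rewrite Gnp in E.
  case: (classic (agA n p)) => H2; last by rewrite Gnag // in E; case: (c n p) E.
  case: (Gag H1 H2) => a [Ea Ha]; rewrite E in Ea; case: Ea => Ea; subst a.
  have H3 : pcond n (rcons p i) by apply: rcons_pcond => //; exists f.
  have Hcn : c n (rcons p i) <> None by case: (Hc n) => _ _ R3; apply: R3 (Ha n (leqnn n)) Hi.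
  case: (classic (agA n (rcons p i))) => H4.
    by case: (Gag H3 H4) => a [-> _].
  by rewrite Gnag //; case: (c n (rcons p i)) Hcn.
Qed.

Lemma G_greatest n h : wf h -> (forall m, n <= m -> le_bot h (c m)) -> le_bot h (G n).
Proof.
move=> Hh Hle p Hp; case E: (h p) => [a|]; last by rewrite E in Hp.
case: (classic (a = Bt)) => [->|Ha]; first by left.
right.
have Hcm : forall m, n <= m -> c m p = Some a.
  move=> m Hm; case: (Hle m Hm p Hp) => Hx; rewrite E in Hx; [by case: Hx => /Ha | by []].
have H1 : pcond n p.
  move=> k Hk; case: (wf_take Hh Hp Hk) => f Hf; exists f => m Hm.
  have Hn : h (take k p) <> None by rewrite Hf.
  by case: (Hle m Hm _ Hn); rewrite Hf.
have H2 : agA n p by exists a.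
case: (Gag H1 H2) => a' [-> Ha']; by rewrite -(Ha' n (leqnn n)) (Hcm n (leqnn n)).
Qed.

Lemma G_chain n n' : n <= n' -> le_bot (G n) (G n').
Proof.
move=> H; apply: G_greatest; first exact: wf_G.
by move=> m Hm; apply: G_le; apply: leq_trans Hm.
Qed.

End Glb.

Section Lub.
Variable g : nat -> pterm.
Hypothesis Hg : forall n, wf (g n).
Hypothesis Hch : forall n n', n <= n' -> le_bot (g n) (g n').

Definition L : pterm := fun p =>
  match excluded_middle_informative (exists a, exists n, g n p = Some a /\ a <> Bt) with
  | left H => Some (proj1_sig (constructive_indefinite_description _ H))
  | right _ => if excluded_middle_informative (exists n, g n p = Some Bt) then Some Bt else None
  end.

Lemma g_cons n n' p a a' : g n p = Some a -> a <> Bt -> g n' p = Some a' -> a' <> Bt -> a = a'.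
Proof.
move=> E1 H1 E2 H2; case: (leqP n n') => Hn.
  have Hn1 : g n p <> None by rewrite E1.
  case: (Hch Hn Hn1) => X; rewrite E1 ?E2 in X; [by case: X => /H1|by case: X].
have Hn1 : g n' p <> None by rewrite E2.
case: (Hch (ltnW Hn) Hn1) => X; rewrite E2 ?E1 in X; [by case: X => /H2|by case: X].
Qed.

Lemma Lval n p a : g n p = Some a -> a <> Bt -> L p = Some a.
Proof.
move=> E H; rewrite /L; case: excluded_middle_informative => [H'|H']; last first.
  by case: H'; exists a, n.
case: constructive_indefinite_description => a' [n' [E' Ha']] /=.
by congr Some; symmetry; apply: g_cons E H E' Ha'.
Qed.

Lemma Lcase p a : L p = Some a -> a <> Bt -> exists n, g n p = Some a.
Proof.
rewrite /L; case: excluded_middle_informative => [H'|H'].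
  case: constructive_indefinite_description => a' [n' [E' _]] /= [<-] _; by exists n'.
by case: excluded_middle_informative => // _ [<-].
Qed.

Lemma Lnone p : L p <> None -> exists n, g n p <> None.
Proof.
rewrite /L; case: excluded_middle_informative => [[a [n [E _]]] _|_].
  by exists n; rewrite E.
case: excluded_middle_informative => // [[n E]] _; by exists n; rewrite E.
Qed.

Lemma Lsome n p : g n p <> None -> L p <> None.
Proof.
case E: (g n p) => [a|] // _; case: (classic (a = Bt)) => [Ea|Ha].
  rewrite /L; case: excluded_middle_informative => // _.
  case: excluded_middle_informative => // [[]]; exists n; by rewrite E Ea.
by rewrite (Lval E Ha).
Qed.

Lemma wf_L : wf L.
Proof.
split.
- by apply: (@Lsome 0); case: (Hg 0).
- move=> p i /Lnone [n Hn]; case: (Hg n) => _ R2 _; case: (R2 _ _ Hn) => f Hf Hi.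
  by exists f => //; apply: Lval Hf _.
- move=> p f i E Hi; case: (Lcase E) => // n Hn.
  case: (Hg n) => _ _ R3; apply: (@Lsome n); exact: R3 Hn Hi.
Qed.

Lemma L_ub n : le_bot (g n) L.
Proof.
move=> p Hp; case E: (g n p) => [a|]; last by rewrite E in Hp.
case: (classic (a = Bt)) => [->|Ha]; first by left.
by right; rewrite (Lval E Ha).
Qed.

Lemma L_least h : wf h -> (forall n, le_bot (g n) h) -> le_bot L h.
Proof.
move=> Hh Hle p Hp; case E: (L p) => [a|]; last by rewrite E in Hp.
case: (classic (a = Bt)) => [->|Ha]; first by left.
right; case: (Lcase E Ha) => n Hn.
have Hn1 : g n p <> None by rewrite Hn.
by case: (Hle n p Hn1); rewrite Hn => -[] // /Ha.
Qed.

End Lub.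

Lemma fin_max k (Q : nat -> nat -> Prop) :
  (forall i n n', n <= n' -> Q i n -> Q i n') ->
  (forall i, i < k -> exists n, Q i n) -> exists n, forall i, i < k -> Q i n.
Proof.
move=> Hm; elim: k => [|k IH] H; first by exists 0.
case: IH => [i Hi|n1 Hn1]; first by apply: H; apply: ltnW.
case: (H k (ltnSn k)) => n2 Hn2; exists (maxn n1 n2) => i.
rewrite ltnS leq_eqVlt => /orP [/eqP ->|Hi].
  by apply: Hm Hn2; rewrite leq_maxr.
by apply: Hm (Hn1 _ Hi); rewrite leq_maxl.
Qed.

Lemma fin_uniform (l : pterm) D (Pr : seq nat -> nat -> Prop) : wf l ->
  (forall p, D < size p -> l p = None) ->
  (forall q n n', n <= n' -> Pr q n -> Pr q n') ->
  (forall q f, l q = Some (Fn f) -> exists n, Pr q n) ->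
  exists n, forall q f, l q = Some (Fn f) -> Pr q n.
Proof.
move=> Hl HD Hm Hex.
suff H : forall d q0, D < size q0 + d ->
    exists n, forall q f, l (q0 ++ q) = Some (Fn f) -> Pr (q0 ++ q) n.
  by case: (H D.+1 [::]) => // n Hn; exists n => q f; apply: Hn.
elim=> [|d IH] q0 Hq0.
  exists 0 => q f; rewrite HD //; rewrite addn0 in Hq0.
  by rewrite size_cat; apply: leq_trans Hq0 (leq_addr _ _).
case E: (l q0) => [[f|x|]|]; last first; [ | |
  | case: (Hex _ _ E) => n0 Hn0 ].
- exists 0 => q g; case: q => [|i q]; first by rewrite cats0 E.
  rewrite -cat_rcons => Hg; have : l (rcons q0 i ++ q) <> None by rewrite Hg.
  by case/(wf_anc Hl) => h; rewrite E.
- exists 0 => q g; case: q => [|i q]; first by rewrite cats0 E.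
  rewrite -cat_rcons => Hg; have : l (rcons q0 i ++ q) <> None by rewrite Hg.
  by case/(wf_anc Hl) => h; rewrite E.
- exists 0 => q g; case: q => [|i q]; first by rewrite cats0 E.
  rewrite -cat_rcons => Hg; have : l (rcons q0 i ++ q) <> None by rewrite Hg.
  by case/(wf_anc Hl) => h; rewrite E.
have [n1 Hn1] : exists n, forall i, i < arity f ->
    forall q g, l (rcons q0 i ++ q) = Some (Fn g) -> Pr (rcons q0 i ++ q) n.
  apply: fin_max.
    by move=> i n n' Hnn H q g Hg; apply: Hm Hnn (H _ _ Hg).
  move=> i _; apply: IH; by rewrite size_rcons addSnnS.
exists (maxn n0 n1) => q g; case: q => [|i q].
  by rewrite cats0 => _; apply: Hm Hn0; rewrite leq_maxl.
rewrite -cat_rcons => Hg.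
have : l (rcons q0 i ++ q) <> None by rewrite Hg.
case/(wf_anc Hl) => h; rewrite E => -[<-] Hi.
by apply: Hm (Hn1 _ Hi _ _ Hg); rewrite leq_maxr.
Qed.


Section TRS.
Variable R : trs F V.
Hypothesis HR : is_TRS arity R.
Hypothesis Hlin : left_linear R.

Definition isredex (t : pterm) (pi : seq nat) : Prop :=
  exists x : pterm * pterm * (V -> pterm),
    [/\ R x.1.1 x.1.2, wf_subst arity x.2 & subterm t pi = subst x.2 x.1.1].

Lemma normal_isredex t : normal_form arity R t <-> ~ exists pi, isredex t pi.
Proof.
split=> H [pi Hpi]; apply: H.
  by case: Hpi => [[[l r] s] [H1 H2 H3]]; exists pi, l, r, s.
by case: Hpi => [l [r [s [H1 H2 H3]]]]; exists pi, (l, r, s).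
Qed.

Definition contract (t : pterm) (pi : seq nat) : pterm :=
  match excluded_middle_informative (isredex t pi) with
  | left H => let x := proj1_sig (constructive_indefinite_description _ H) in
              replace t pi (subst x.2 x.1.2)
  | right _ => t end.

Lemma contract_step t pi : isredex t pi -> step arity R t pi (contract t pi).
Proof.
rewrite /contract => H; case: excluded_middle_informative => // H'.
case: constructive_indefinite_description => [[[l r] s] [H1 H2 H3]] /=.
by exists l, r, s.
Qed.

Lemma redex_pos t pi : isredex t pi -> t pi <> None.
Proof.
case=> [[[l r] s] [H1 H2 H3]] /=.
have := congr1 (fun f => f [::]) H3; rewrite /subterm cats0 /= => ->.
by apply: subst_root => //; case: (HR H1) => [[]].
Qed.

Lemma wf_contract t pi : wf t -> wf (contract t pi).
Proof.
rewrite /contract => Ht; case: excluded_middle_informative => // H.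
have Hp := redex_pos H.
case: constructive_indefinite_description => [[[l r] s] [H1 H2 H3]] /=.
apply: wf_replace => //; apply: wf_subst_term => //; by case: (HR H1) => [[]].
Qed.

Lemma subst_None sigma (l : pterm) : wf l -> forall p q, l q = None -> subst_aux sigma l q p = None.
Proof.
move=> Hl; elim=> [|i p IH] q E /=; rewrite E //.
apply: IH; case E2: (l (rcons q i)) => [a|] //.
have : l (rcons q i ++ [::]) <> None by rewrite cats0 E2.
by case/(wf_anc Hl) => f; rewrite E.
Qed.

Lemma subst_Fun sigma (l : pterm) f : wf l -> forall p q,
  l (q ++ p) = Some (Fn f) -> subst_aux sigma l q p = Some (Fn f).
Proof.
move=> Hl; elim=> [|i p IH] q /=; first by rewrite cats0 => ->.
move=> E; have : l (rcons q i ++ p) <> None by rewrite cat_rcons E.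
case/(wf_anc Hl) => g Eg _; rewrite Eg; apply: IH; by rewrite cat_rcons.
Qed.

Lemma redex_of_pattern t pi l r : wf t -> R l r ->
  (forall q f, l q = Some (Fn f) -> t (pi ++ q) = Some (Fn f)) -> isredex t pi.
Proof.
move=> Ht Hlr Hpat; case: (HR Hlr) => [[Hl _] Htot _ Hroot _].
pose sig' := fun x => match excluded_middle_informative (exists p, l p = Some (Vr x)) with
  | left H => subterm t (pi ++ proj1_sig (constructive_indefinite_description _ H))
  | right _ => bot_term F V end.
have Hsig : forall x p, l p = Some (Vr x) -> sig' x = subterm t (pi ++ p).
  move=> x p Hp; rewrite /sig'; case: excluded_middle_informative => [H|[]]; last by exists p.
  case: constructive_indefinite_description => p' Hp' /=.
  by rewrite (Hlin Hlr Hp' Hp).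
exists (l, r, sig'); split => //=.
  move=> x; rewrite /sig'; case: excluded_middle_informative => [H|_]; last exact: wf_bot.
  case: constructive_indefinite_description => p Hp /=.
  apply: wf_subterm => //; case/lastP: p Hp => [|q i] Hp; first by case: (Hroot x).
  have : l (rcons q i ++ [::]) <> None by rewrite cats0 Hp.
  case/(wf_anc Hl) => f Hf Hi; have := Hpat _ _ Hf.
  case: Ht => _ _ T3 /T3 /(_ Hi); by rewrite rcons_cat.
suff H : forall p q, l q <> None -> subst_aux sig' l q p = t (pi ++ q ++ p).
  by apply: functional_extensionality => p; rewrite /subterm /subst H //; case: Hl.
elim=> [|i p IH] q Hq /=.
  case E: (l q) => [[f|x|]|] //; rewrite ?cats0.
  - by rewrite (Hpat _ _ E).
  - by rewrite (Hsig _ _ E) /subterm cats0.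
  - by case: (Htot q).
case E: (l q) => [[f|x|]|] //.
- case E2: (l (rcons q i)) => [a|].
    by rewrite IH ?E2 // cat_rcons.
  rewrite subst_None //.
  case E3: (t (pi ++ q ++ i :: p)) => [b|] //.
  have : t (rcons (pi ++ q) i ++ p) <> None by rewrite cat_rcons -catA E3.
  case/(wf_anc Ht) => g; rewrite (Hpat _ _ E) => -[<-] Hi.
  by case: Hl => _ _ L3; case: (L3 _ _ _ E Hi).
- by rewrite (Hsig _ _ E) /subterm catA.
- by case: (Htot q).
Qed.


Hypothesis Hlf : left_finite R.

Definition pos (j : nat) : seq nat := odflt [::] (@unpickle (seq nat) j).
Definition fi (k : nat) : nat := logn 2 k.+1.

Lemma fair j n : exists m, n <= m /\ fi m = j.
Proof.
have H0 := expn_gt0 2 j; rewrite /= in H0.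
exists (2 ^ j * n.*2.+1).-1; split.
  have : 0 < 2 ^ j by []. nia.
rewrite /fi prednK; last by rewrite muln_gt0 H0.
rewrite lognM // pfactorK // logn_coprime ?addn0 //.
by rewrite coprime2n /= odd_double.
Qed.

Definition pick (t : pterm) (k : nat) : seq nat :=
  match excluded_middle_informative (isredex t (pos (fi k))) with
  | left _ => pos (fi k)
  | right _ => match excluded_middle_informative (exists pi, isredex t pi) with
     | left H => proj1_sig (constructive_indefinite_description _ H)
     | right _ => [::] end end.

Lemma pick_redex t k : (exists pi, isredex t pi) -> isredex t (pick t k).
Proof.
rewrite /pick => H; case: excluded_middle_informative => // _.
case: excluded_middle_informative => // H'.
by case: constructive_indefinite_description.
Qed.

Lemma pick_fair t k : isredex t (pos (fi k)) -> pick t k = pos (fi k).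
Proof. by rewrite /pick; case: excluded_middle_informative. Qed.

Variable t0 : pterm.
Hypothesis Ht0 : wf t0.

Fixpoint seqt (k : nat) : pterm :=
  if k is k'.+1 then contract (seqt k') (pick (seqt k') k') else t0.

Lemma wf_seqt k : wf (seqt k).
Proof. elim: k => [|k IH] //=; exact: wf_contract. Qed.

Lemma wf_replace_bot t pi : wf t -> t pi <> None -> wf (replace t pi (bot_term F V)).
Proof. move=> Ht Hp; apply: wf_replace => //; exact: wf_bot. Qed.

Lemma replace_Fun t pi x f : replace t pi (bot_term F V) x = Some (Fn f) -> t x = Some (Fn f).
Proof.
rewrite /replace; case: prefix => //.
by case: (drop (size pi) x).
Qed.

Lemma replace_at t pi : replace t pi (bot_term F V) pi = Some Bt.
Proof. by rewrite /replace prefix_refl drop_size. Qed.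

Lemma wf_well_order (W : Type) (f : W -> nat) : well_founded (fun a b => f a < f b).
Proof.
move=> a; suff: forall k a, f a < k -> Acc (fun a b => f a < f b) a by apply; apply: ltnSn.
elim=> [|k IH] b Hb; first by rewrite ltn0 in Hb.
constructor => c Hc; apply: IH.
by apply: leq_trans Hc _; rewrite -ltnS.
Qed.

Lemma exists_min (Pn : nat -> Prop) : (exists n, Pn n) ->
  exists n, Pn n /\ forall k, k < n -> ~ Pn k.
Proof.
case=> n; elim/ltn_ind: n => n IH Hn.
case: (classic (exists k, k < n /\ Pn k)) => [[k [Hk Pk]]|H]; first exact: IH Hk Pk.
by exists n; split => // k Hk Pk; apply: H; exists k.
Qed.


Lemma inf_case : (forall k, exists pi, isredex (seqt k) pi) ->
  exists t', [/\ wf t', normal_form arity R t' & sp_reachable arity R t0 t'].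
Proof.
move=> Hinf.
pose P := fun k => pick (seqt k) k.
pose c := fun k => replace (seqt k) (P k) (bot_term F V).
have Hc : forall m, wf (c m).
  by move=> m; rewrite /c /P; apply: wf_replace_bot (wf_seqt m) (redex_pos (pick_redex m (Hinf m))).
have HG := wf_G Hc; have Hch := G_chain Hc.
pose U := L (G c).
have HU : wf U by apply: wf_L.
exists U; split => //.
- apply/normal_isredex => -[pi [[[l r] s] [Hlr Hs Heq]]] /=; rewrite /= in Hlr Hs Heq.
  case: (HR Hlr) => [[Hl _] Htot _ Hroot _].
  have HUp : forall q f, l q = Some (Fn f) -> U (pi ++ q) = Some (Fn f).
    move=> q f Hq; have := congr1 (fun h => h q) Heq; rewrite /subterm => ->.
    by rewrite /subst; apply: subst_Fun.
  case: (Hlf Hlr) => D HD.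
  have [N HN] : exists n, forall q f, l q = Some (Fn f) ->
      forall f', l q = Some (Fn f') -> forall m, n <= m -> c m (pi ++ q) = Some (Fn f').
    apply: (fin_uniform Hl HD).
      by move=> q n n' Hnn H f' Hf' m Hm; apply: H Hf' m (leq_trans Hnn Hm).
    move=> q f Hq; have := HUp _ _ Hq => /Lcase [//|n Hn].
    exists n => f' Hf' m Hm; rewrite Hq in Hf'; case: Hf' => <-.
    have Hn1 : G c n (pi ++ q) <> None by rewrite Hn.
    by case: (G_le Hm Hn1); rewrite Hn => // -[].
  case: (fair (pickle pi) N) => m [Hm Hfm].
  have Hpos : pos (fi m) = pi by rewrite /pos Hfm pickleK.
  have Hred : isredex (seqt m) pi.
    apply: (redex_of_pattern (wf_seqt m) Hlr) => q f Hq.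
    exact: replace_Fun (HN _ _ Hq _ Hq m Hm).
  have HPm : P m = pi by rewrite /P pick_fair Hpos.
  case E: (l [::]) => [[f|x|]|]; last by case: Hl => H1 _ _.
  + have := HN _ _ E _ E m Hm; rewrite cats0 /c HPm replace_at; by [].
  + by case: (Hroot x).
  + by case: (Htot [::]).
- exists nat, (fun a b => a < b), (fun x => if x is Some i then seqt i else U), P.
  split.
    split; first exact: (@wf_well_order nat id).
      by move=> a b d; apply: ltn_trans.
    by move=> a b; case: (ltngtP a b) => H; auto.
  split.
  + by case=> [i|] //=; exact: wf_seqt.
  + case=> [[|i]|] H //; exfalso.
      by apply: (H (Some i)); rewrite /= ltnSn.
    by apply: (H (Some 0)).
  + move=> i x [H1 H2]; case: x H1 H2 => [j|] H1 H2 /=; rewrite /= in H1.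
      have Hj : j = i.+1.
        case: (ltnP i.+1 j) => Hj; last by apply/eqP; rewrite eqn_leq Hj H1.
        by case: (H2 (Some i.+1) (ltnSn i)) => /= [[E]|]; [rewrite E ltnn in Hj| rewrite ltnNge (ltnW Hj)].
      by rewrite Hj /=; apply: contract_step; apply: pick_redex.
    by case: (H2 (Some i.+1) (ltnSn i)).
  + move=> x [[y Hy] Hl]; case: x Hy Hl => [j|] Hy Hl.
      case: y Hy => [k|] //= Hk.
      case: (Hl (Some j.-1)) => /=; first by rewrite prednK // (leq_ltn_trans _ Hk).
      by case=> [z|] //= H1 H2; move: H1 H2; lia.
    exists (G c); split.
      move=> b _; split; first exact: HG.
        by move=> v [i [Hi _ ->]]; apply: G_le; case: Hi => [->|/ltnW].
      move=> h Hh Hle; apply: G_greatest => // m Hm; apply: Hle; exists m; split => //.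
      by move: Hm; rewrite leq_eqVlt => /orP [/eqP ->|]; [left|right].
    split => //.
      by move=> v [b _ ->]; apply: L_ub.
    by move=> h Hh Hle; apply: L_least => // n; apply: Hle; exists n.
  + by [].
Qed.


Lemma fin_case n : (forall k, k < n -> exists pi, isredex (seqt k) pi) ->
  ~ (exists pi, isredex (seqt n) pi) ->
  exists t', [/\ wf t', normal_form arity R t' & sp_reachable arity R t0 t'].
Proof.
move=> Hfin Hn.
exists (seqt n); split; [exact: wf_seqt | by apply/normal_isredex |].
exists 'I_n, (fun a b : 'I_n => a < b),
  (fun x : option 'I_n => if x is Some i then seqt i else seqt n),
  (fun i : 'I_n => pick (seqt i) i).
have mkpred : forall j : 'I_n, j.-1 < n by move=> j; exact: leq_ltn_trans (leq_pred j) (ltn_ord j).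
split.
  split; first exact: (@wf_well_order 'I_n (@nat_of_ord n)).
    by move=> a b d; apply: ltn_trans.
  by move=> a b; case: (ltngtP a b) => H; auto; right; left; apply: val_inj.
split.
+ by case=> [i|] //=; exact: wf_seqt.
+ case=> [i|] H /=.
    case: i H => [[|i] Hi] H //; exfalso.
    by apply: (H (Some (Ordinal (mkpred (Ordinal Hi))))); rewrite /= ltnSn.
  case: n Hfin Hn H mkpred => [|n] Hfin Hn H mkpred //; exfalso.
  by apply: (H (Some ord0)).
+ move=> i x [H1 H2]; case: x H1 H2 => [j|] H1 H2 /=; rewrite /= in H1.
    have Hj : nat_of_ord j = i.+1.
      case: (ltnP i.+1 j) => Hj; last by apply/eqP; rewrite eqn_leq Hj H1.
      have Hi1 : i.+1 < n by apply: ltn_trans Hj (ltn_ord j).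
      case: (H2 (Some (Ordinal Hi1)) (ltnSn i)) => /= [[E]|].
        by rewrite E /= ltnn in Hj.
      by rewrite ltnNge (ltnW Hj).
    by rewrite Hj /=; apply: contract_step; apply: pick_redex; apply: Hfin.
  have Hi : nat_of_ord i = n.-1.
    case: (ltnP i.+1 n) => Hi1; last by move: (ltn_ord i) Hi1; lia.
    by case: (H2 (Some (Ordinal Hi1)) (ltnSn i)).
  have -> : seqt n = seqt i.+1 by congr seqt; move: (ltn_ord i) Hi; lia.
  by apply: contract_step; apply: pick_redex; apply: Hfin.
+ move=> x [[y Hy] Hl]; case: x Hy Hl => [j|] Hy Hl.
    case: y Hy => [k|] //= Hk.
    case: (Hl (Some (Ordinal (mkpred j)))) => /=; first by rewrite prednK // (leq_ltn_trans _ Hk).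
    by case=> [z|] //= H1 H2; move: H1 H2; lia.
  case: y Hy => [k|] //= _.
  have Hn1 : n.-1 < n by move: (ltn_ord k); lia.
  case: (Hl (Some (Ordinal Hn1))) => //= -[z|] //= H1 _.
  by move: H1 (ltn_ord z); lia.
+ by [].
Qed.

Lemma main_lemma : exists t', [/\ wf t', normal_form arity R t' & sp_reachable arity R t0 t'].
Proof.
case: (classic (exists n, ~ exists pi, isredex (seqt n) pi)) => H.
  case: (exists_min H) => n [Hn Hmin]; apply: (fin_case (n := n)) => // k Hk.
  by apply: NNPP; apply: Hmin.
apply: inf_case => k; apply: NNPP => Hk; apply: H; by exists k.
Qed.

End TRS.
End Pf.

Theorem theorem6p14 (F V : Type) (arity : F -> nat) (R : trs F V) :
  is_TRS arity R -> orthogonal arity R -> left_finite R ->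
  forall t : pterm F V, wf_term arity t ->
  exists t' : pterm F V,
    [/\ wf_term arity t', normal_form arity R t' & sp_reachable arity R t t'].
Proof.
move=> HR [Hlin _] Hlf t Ht; exact: (main_lemma HR Hlin Hlf Ht).
Qed.
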